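(* Let $v\ge 2$ and $1\le s<t\le k$ be integers such that every prime divisor of $v$ is at least $k$. Then there exists an AOA$(s,t,k,v)$.
   Context: An orthogonal array OA$(t,k,v)$ (with $1\le t\le k$) is a $v^t\times k$ array with entries from a set $X$ of size $v$ such that, for every choice of $t$ of its columns, each $t$-tuple in $X^t$ appears exactly once as a row of the corresponding $v^t\times t$ subarray. For integers $1\le s\le t\le k$, an augmented orthogonal array AOA$(s,t,k,v)$ is a $v^t\times(k+1)$ array $A$ such that: (1) the first $k$ columns of $A$ form an OA$(t,k,v)$ on a symbol set $X$ of size $v$; (2) the last column of $A$ has entries from a set $Y$ of size $v^{t-s}$; (3) for any choice of $s$ of the first $k$ columns, these $s$ columns together with the last column contain every $(s+1)$-tuple of $X^s\times Y$ exactly once as a row. *)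

(* Defs.v *)
From mathcomp Require Import all_boot.
Set Implicit Arguments. Unset Strict Implicit. Unset Printing Implicit Defensive.

(* An array with v^t rows and k columns over the symbol set X = 'I_v is
   represented as a function  A : 'I_(v^t) -> 'I_k -> 'I_v  (A r c = entry in
   row r, column c).  A choice of t columns is an injective map 'I_t -> 'I_k. *)
Definition is_OA (t k v : nat) (A : 'I_(v ^ t) -> 'I_k -> 'I_v) : Prop :=
  forall f : 'I_t -> 'I_k, injective f ->
  forall x : 'I_t -> 'I_v, exists! r : 'I_(v ^ t), forall i, A r (f i) = x i.

(* Augmented orthogonal array AOA(s,t,k,v): the first k columns are A,
   the last column is L, with entries in Y = 'I_(v^(t-s)). *)
Definition is_AOA (s t k v : nat) (A : 'I_(v ^ t) -> 'I_k -> 'I_v)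
    (L : 'I_(v ^ t) -> 'I_(v ^ (t - s))) : Prop :=
  [/\ 1 <= s, s <= t, t <= k,
      is_OA A &
      forall g : 'I_s -> 'I_k, injective g ->
      forall (x : 'I_s -> 'I_v) (y : 'I_(v ^ (t - s))),
      exists! r : 'I_(v ^ t), (forall i, A r (g i) = x i) /\ L r = y].

(* Main.v *)
Require Import Defs.
From mathcomp Require Import all_boot all_algebra.
From mathcomp Require Import zify.
Set Implicit Arguments. Unset Strict Implicit. Unset Printing Implicit Defensive.
Import GRing.Theory.
Local Open Scope ring_scope.

Section Aux.
Variable v k : nat.
Hypothesis hv : (1 < v)%N.
Hypothesis hp : forall p : nat, prime p -> (p %| v)%N -> (k <= p)%N.

Lemma coprime_small m : (0 < m < k)%N -> coprime v m.
Proof.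
case/andP=> m0 mk; apply/negPn/negP => nc.
have g1 : (1 < gcdn v m)%N.
  rewrite ltn_neqAle eq_sym nc /= gcdn_gt0 m0 orbT //.
have pp := pdiv_prime g1.
have d := pdiv_dvd (gcdn v m).
have dv : (pdiv (gcdn v m) %| v)%N by apply: dvdn_trans d (dvdn_gcdl _ _).
have dm : (pdiv (gcdn v m) %| m)%N by apply: dvdn_trans d (dvdn_gcdr _ _).
have := hp pp dv; have := dvdn_leq m0 dm. lia.
Qed.
Lemma diff_unit (a b : nat) : (a < k)%N -> (b < k)%N -> a != b ->
  (b%:R - a%:R : 'Z_v) \is a GRing.unit.
Proof.
move=> ak bk ab.
case: (ltngtP a b) => [lab|lba|eab]; last by rewrite eab eqxx in ab.
- rewrite -natrB; last exact: ltnW.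
  rewrite unitZpE //. apply: coprime_small.
  rewrite subn_gt0 lab /=. exact: leq_ltn_trans (leq_subr _ _) bk.
- rewrite -opprB unitrN -natrB; last exact: ltnW.
  rewrite unitZpE //. apply: coprime_small.
  rewrite subn_gt0 lba /=. exact: leq_ltn_trans (leq_subr _ _) ak.
Qed.

Lemma uniq_roots_pts n (a : 'I_n -> nat) : injective a -> (forall i, a i < k)%N ->
  forall s : seq 'I_n, uniq s -> uniq_roots [seq ((a i)%:R : 'Z_v) | i <- s].
Proof.
move=> ai ak; elim=> //= x s IH /andP[xs us]; rewrite IH // andbT all_map.
apply/allP => y ys /=; rewrite /diff_roots mulrC eqxx /= diff_unit //.
apply/eqP => /ai exy; by rewrite exy ys in xs.
Qed.

Lemma poly_zero n (a : 'I_n -> nat) (p : {poly 'Z_v}) : injective a -> (forall i, a i < k)%N ->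
  (size p <= n)%N -> (forall i, p.[(a i)%:R] = 0) -> p = 0.
Proof.
move=> ai ak sp r; apply/eqP/negPn/negP => p0.
have := max_ring_poly_roots p0 _ (uniq_roots_pts ai ak (enum_uniq 'I_n)).
rewrite size_map -cardE card_ord.
have -> : all (root p) [seq ((a i)%:R : 'Z_v) | i <- enum 'I_n].
  by apply/allP => z /mapP [i _ ->]; apply/rootP.
by move=> /(_ isT); rewrite ltnNge sp.
Qed.
End Aux.

Lemma uniq_pre (T U : finType) (F : T -> U) : injective F -> (#|U| <= #|T|)%N ->
  forall y, exists! x, F x = y.
Proof.
move=> Fi cU y; have [g gK Kg] := inj_card_bij Fi cU.
exists (g y); split; first exact: Kg.
by move=> x <-; rewrite gK.
Qed.

Section Main.
Variables v s t k : nat.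
Hypothesis hv : (1 < v)%N.
Hypothesis hp : forall p : nat, prime p -> (p %| v)%N -> (k <= p)%N.
Hypothesis st : (s < t)%N.
Hypothesis tk : (t <= k)%N.

Lemma cardZ : #|'Z_v| = v. Proof. by rewrite card_ord Zp_cast. Qed.
Definition Tc := {ffun 'I_t -> 'Z_v}.
Lemma EC : (v ^ t)%N = #|Tc|. Proof. by rewrite card_ffun cardZ card_ord. Qed.
Definition coef (r : 'I_((v ^ t)%N)) : Tc := enum_val (cast_ord EC r).
Definition P r : {poly 'Z_v} := Poly (fgraph (coef r)).
Definition toI (z : 'Z_v) : 'I_v := cast_ord (Zp_cast hv) z.
Definition AA (r : 'I_((v ^ t)%N)) (j : 'I_k) : 'I_v := toI (P r).[(j : nat)%:R].
Definition Th := {ffun 'I_(t - s) -> 'Z_v}.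
Lemma EH : #|Th| = (v ^ (t - s))%N. Proof. by rewrite card_ffun cardZ card_ord. Qed.
Definition high r : Th := [ffun j : 'I_(t - s) => (P r)`_(s + j)].
Definition LL r : 'I_((v ^ (t - s))%N) := cast_ord EH (enum_rank (high r)).

Lemma coef_inj : injective coef.
Proof. by move=> r1 r2 /enum_val_inj /cast_ord_inj. Qed.

Lemma P_coef r (l : 'I_t) : (P r)`_l = coef r l.
Proof. by rewrite coef_Poly nth_fgraph_ord. Qed.

Lemma size_P r : (size (P r) <= t)%N.
Proof. by apply: leq_trans (size_Poly _) _; rewrite size_tuple card_ord. Qed.

Lemma P_inj r1 r2 : P r1 - P r2 = 0 -> r1 = r2.
Proof.
move/eqP; rewrite subr_eq0 => /eqP e; apply: coef_inj; apply/ffunP => l.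
by rewrite -!P_coef e.
Qed.

Lemma toI_inj : injective toI.
Proof. exact: cast_ord_inj. Qed.

Lemma key n (g : 'I_n -> 'I_k) r1 r2 : injective g ->
  (size (P r1 - P r2)%R <= n)%N -> (forall i, AA r1 (g i) = AA r2 (g i)) -> r1 = r2.
Proof.
move=> gi sz e; apply: P_inj.
apply: (poly_zero hv hp (a := fun i => val (g i)) _ _ sz).
- by move=> i j /val_inj /gi.
- by move=> i; apply: ltn_ord.
- move=> i; rewrite hornerD hornerN; apply/eqP; rewrite subr_eq0; apply/eqP.
  exact: toI_inj (e i).
Qed.

Lemma OA_ok : is_OA AA.
Proof.
move=> f fi x.
pose F r : {ffun 'I_t -> 'I_v} := [ffun i => AA r (f i)].
have Fi : injective F.
  move=> r1 r2 e; apply: (key fi).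
  - by apply: leq_trans (size_polyD _ _) _; rewrite size_polyN geq_max !size_P.
  - by move=> i; move: e => /ffunP/(_ i); rewrite !ffunE.
have cc : (#|{ffun 'I_t -> 'I_v}| <= #|'I_(v ^ t)|)%N.
  by rewrite card_ffun !card_ord.
have [r [Fr U]] := uniq_pre Fi cc [ffun i => x i].
exists r; split.
  by move=> i; move: Fr => /ffunP/(_ i); rewrite !ffunE.
move=> r' Hr'; apply: U; apply/ffunP => i; by rewrite !ffunE.
Qed.

Lemma high_coef r1 r2 : high r1 = high r2 -> forall j, (s <= j)%N -> (P r1)`_j = (P r2)`_j.
Proof.
move=> e j sj; case: (ltnP j t) => jt.
  have jo : (j - s < t - s)%N by rewrite ltn_sub2r.
  move: e => /ffunP/(_ (Ordinal jo)); rewrite !ffunE /= subnKC //.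
by rewrite !(leq_sizeP _ _ (size_P _)).
Qed.

Lemma AOA_ok : forall g : 'I_s -> 'I_k, injective g ->
      forall (x : 'I_s -> 'I_v) (y : 'I_((v ^ (t - s))%N)),
      exists! r : 'I_((v ^ t)%N), (forall i, AA r (g i) = x i) /\ LL r = y.
Proof.
move=> g gi x y.
pose F r : {ffun 'I_s -> 'I_v} * 'I_((v ^ (t - s))%N) := ([ffun i => AA r (g i)], LL r).
have Fi : injective F.
  move=> r1 r2 [e1 e2]; apply: (key gi).
    have hh : high r1 = high r2 := enum_rank_inj (val_inj e2).
    by apply/leq_sizeP => j sj; rewrite coefB (high_coef hh sj) subrr.
  - by move=> i; move: e1 => /ffunP/(_ i); rewrite !ffunE.
have := uniq_pre Fi; case/(_ _ ([ffun i => x i], y)) => [|r [Fr U]].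
  by rewrite card_prod card_ffun !card_ord -expnD subnKC // ltnW.
exists r; split.
  case: Fr => Fr ->; split=> //.
  by move=> i; move: Fr => /ffunP/(_ i); rewrite !ffunE.
move=> r' [Hr' Hy]; apply: U; rewrite /F Hy; congr pair; apply/ffunP => i; by rewrite !ffunE.
Qed.
End Main.

Local Close Scope ring_scope.

Theorem theorem2p2 (v s t k : nat) :
  2 <= v -> 1 <= s -> s < t -> t <= k ->
  (forall p : nat, prime p -> p %| v -> k <= p) ->
  exists (A : 'I_(v ^ t) -> 'I_k -> 'I_v) (L : 'I_(v ^ t) -> 'I_(v ^ (t - s))),
    is_AOA A L.
Proof.
move=> hv hs st tk hp.
exists (AA (t:=t) (k:=k) hv), (LL s (t:=t) hv); split => //.
- exact: ltnW.
- exact: OA_ok.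
- move=> g gi x y; exact: AOA_ok.
Qed.
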